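(* The assignment $\Gamma$ is a functor from the category $\mathfrak{B}$ of Bochvar algebras (with homomorphisms) to the category $\mathfrak{S}$ of Bochvar systems. It sends a Bochvar algebra $\mathbf{A}$ to $\mathbb{B}_{\mathbf{A}}$, and a homomorphism $f:\mathbf{A}_1\to\mathbf{A}_2$ to its restriction to the bottom fibre of $\mathbf{A}_1$. In particular, this restriction maps the bottom fibre of $\mathbf{A}_1$ into the bottom fibre of $\mathbf{A}_2$ and is a morphism of Bochvar systems $\mathbb{B}_{\mathbf{A}_1}\to\mathbb{B}_{\mathbf{A}_2}$.
   Context: $\mathbf{WK}^e$ is the three-element algebra on $\{0,\tfrac12,1\}$ of type $\langle\wedge,\vee,\neg,J_2,0,1\rangle$. Its operations are: - $\neg$ swaps $0,1$ and fixes $\tfrac12$; - $\wedge,\vee$ are Boolean on $\{0,1\}$ and return $\tfrac12$ if some argument is $\tfrac12$; - $J_2(1)=1$ and $J_2(\tfrac12)=J_2(0)=0$. Bochvar algebras are the members of $ISP(\mathbf{WK}^e)$. The $\{\wedge,\vee,\neg,0,1\}$-reduct of a Bochvar algebra is canonically a Płonka sum of Boolean algebras $\mathbf{A}_i$ over a join-semilattice $\langle I,\vee,i_0\rangle$; the bottom fibre is $\mathbf{A}_{i_0}$. A Bochvar system is a pair $\langle\mathbf{B},\mathbf{I}\rangle$ with $\mathbf{B}$ a Boolean algebra and $I\subseteq B$ containing $1$ and closed under $\wedge$. A morphism $\langle\mathbf{B}_1,\mathbf{I}_1\rangle\to\langle\mathbf{B}_2,\mathbf{I}_2\rangle$ is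 a Boolean homomorphism $g$ with $g(I_1)\subseteq I_2$. $\mathbb{B}_{\mathbf{A}}=\langle\mathbf{A}_{i_0},K\rangle$ with $K=\{J_2(1^{A_i}):i\in I\}$, where $1^{A_i}$ is the top of fibre $\mathbf{A}_i$. *)

(* Defs.v *)
(** The carrier of WK^e : {0, 1/2, 1}. *)
Inductive W3 : Type := W0 | Wh | W1.

Definition wneg (x : W3) : W3 :=
  match x with W0 => W1 | Wh => Wh | W1 => W0 end.
Definition wmeet (x y : W3) : W3 :=
  match x, y with
  | Wh, _ | _, Wh => Wh
  | W1, W1 => W1
  | _, _ => W0
  end.
Definition wjoin (x y : W3) : W3 :=
  match x, y with
  | Wh, _ | _, Wh => Wh
  | W0, W0 => W0
  | _, _ => W1
  end.
Definition wJ2 (x : W3) : W3 := match x with W1 => W1 | _ => W0 end.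

Record alg := Alg {
  car :> Type;
  meet : car -> car -> car;
  join : car -> car -> car;
  neg  : car -> car;
  J2   : car -> car;
  zero : car;
  one  : car }.

(** Bochvar algebras = ISP(WK^e): isomorphic to a subalgebra of a power
    (WK^e)^X, i.e. there is an injective homomorphism into W3^X. *)
Definition is_bochvar (A : alg) : Prop :=
  exists (X : Type) (e : A -> X -> W3),
    (forall a b, e a = e b -> a = b) /\
    (forall a b x, e (meet A a b) x = wmeet (e a x) (e b x)) /\
    (forall a b x, e (join A a b) x = wjoin (e a x) (e b x)) /\
    (forall a x, e (neg A a) x = wneg (e a x)) /\
    (forall a x, e (J2 A a) x = wJ2 (e a x)) /\
    (forall x, e (zero A) x = W0) /\
    (forall x, e (one A) x = W1).

Definition is_hom (A B : alg) (f : A -> B) : Prop :=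
  (forall a b, f (meet A a b) = meet B (f a) (f b)) /\
  (forall a b, f (join A a b) = join B (f a) (f b)) /\
  (forall a, f (neg A a) = neg B (f a)) /\
  (forall a, f (J2 A a) = J2 B (f a)) /\
  f (zero A) = zero B /\
  f (one A) = one B.

(** Płonka decomposition of the {meet,join,neg,0,1}-reduct: the top element
    1^{A_i} of the fibre A_i containing a is  a ∨ ¬a  (computed inside the
    Boolean algebra A_i); two elements lie in the same fibre iff their
    fibres have the same top. *)
Definition fibre_top (A : alg) (a : A) : A := join A a (neg A a).

Definition bottom_fibre (A : alg) (a : A) : Prop :=
  fibre_top A a = fibre_top A (zero A).

Definition Kset (A : alg) (k : A) : Prop :=
  exists a : A, k = J2 A (fibre_top A a).

Definition boolean_algebra_on {T : Type} (P : T -> Prop)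
  (m j : T -> T -> T) (n : T -> T) (z o : T) : Prop :=
  P z /\ P o /\
  (forall x y, P x -> P y -> P (m x y)) /\
  (forall x y, P x -> P y -> P (j x y)) /\
  (forall x, P x -> P (n x)) /\
  (forall x y z, P x -> P y -> P z -> m x (m y z) = m (m x y) z) /\
  (forall x y z, P x -> P y -> P z -> j x (j y z) = j (j x y) z) /\
  (forall x y, P x -> P y -> m x y = m y x) /\
  (forall x y, P x -> P y -> j x y = j y x) /\
  (forall x y, P x -> P y -> m x (j x y) = x) /\
  (forall x y, P x -> P y -> j x (m x y) = x) /\
  (forall x y z, P x -> P y -> P z -> m x (j y z) = j (m x y) (m x z)) /\
  (forall x, P x -> m x (n x) = z) /\
  (forall x, P x -> j x (n x) = o).

Definition bochvar_system_on {T : Type} (P : T -> Prop)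
  (m j : T -> T -> T) (n : T -> T) (z o : T) (I : T -> Prop) : Prop :=
  boolean_algebra_on P m j n z o /\
  (forall x, I x -> P x) /\ I o /\
  (forall x y, I x -> I y -> I (m x y)).

Definition BA_system (A : alg) : Prop :=
  bochvar_system_on (bottom_fibre A) (meet A) (join A) (neg A)
    (zero A) (one A) (Kset A).

Definition system_morphism_on {T1 T2 : Type}
  (P1 : T1 -> Prop) (m1 j1 : T1 -> T1 -> T1) (n1 : T1 -> T1) (z1 o1 : T1)
  (I1 : T1 -> Prop)
  (P2 : T2 -> Prop) (m2 j2 : T2 -> T2 -> T2) (n2 : T2 -> T2) (z2 o2 : T2)
  (I2 : T2 -> Prop) (g : T1 -> T2) : Prop :=
  (forall x, P1 x -> P2 (g x)) /\
  (forall x y, P1 x -> P1 y -> g (m1 x y) = m2 (g x) (g y)) /\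
  (forall x y, P1 x -> P1 y -> g (j1 x y) = j2 (g x) (g y)) /\
  (forall x, P1 x -> g (n1 x) = n2 (g x)) /\
  g z1 = z2 /\ g o1 = o2 /\
  (forall x, I1 x -> I2 (g x)).

Definition BA_morphism (A1 A2 : alg) (f : A1 -> A2) : Prop :=
  system_morphism_on
    (bottom_fibre A1) (meet A1) (join A1) (neg A1) (zero A1) (one A1) (Kset A1)
    (bottom_fibre A2) (meet A2) (join A2) (neg A2) (zero A2) (one A2) (Kset A2)
    f.

(* Main.v *)
Require Import Defs.
From Stdlib Require Import FunctionalExtensionality.

Lemma hom_top (A1 A2 : alg) (f : A1 -> A2) :
  is_hom A1 A2 f -> forall a, f (fibre_top A1 a) = fibre_top A2 (f a).
Proof.
  intros [hm [hj [hn [hJ [hz ho]]]]] a. unfold fibre_top. rewrite hj, hn. reflexivity.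
Qed.

Theorem lemma3p7 :
  (forall A : alg, is_bochvar A -> BA_system A) /\
  (forall (A1 A2 : alg) (f : A1 -> A2),
     is_bochvar A1 -> is_bochvar A2 -> is_hom A1 A2 f ->
     (forall a, bottom_fibre A1 a -> bottom_fibre A2 (f a)) /\
     BA_morphism A1 A2 f).
Proof.
  split.
  - intros A [X [e [inj [hm [hj [hn [hJ [hz ho]]]]]]]].
    assert (beq : forall a b, (forall x, e a x = e b x) -> a = b).
    { intros a b H. apply inj. apply functional_extensionality. exact H. }
    assert (bf : forall a, bottom_fibre A a <-> forall x, e a x <> Wh).
    { intro a; unfold bottom_fibre, fibre_top; split.
      - intros H x. apply (f_equal (fun t => e t x)) in H.
        rewrite !hj, !hn, hz in H. destruct (e a x); simpl in *; congruence.
      - intros H; apply beq; intro x; rewrite !hj, !hn, hz.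
        specialize (H x); destruct (e a x); simpl; congruence. }
    unfold BA_system, bochvar_system_on, boolean_algebra_on.
    repeat split; intros;
    repeat match goal with H : bottom_fibre _ ?a |- _ => pose proof (proj1 (bf a) H); clear H end;
    try apply bf;
    try (intro w; repeat first [rewrite hm | rewrite hj | rewrite hn | rewrite hJ | rewrite hz | rewrite ho];
         repeat match goal with H : forall y : X, e ?a y <> Wh |- _ =>
           specialize (H w); destruct (e a w) end; simpl; congruence);
    try (apply beq; intro w; repeat first [rewrite hm | rewrite hj | rewrite hn | rewrite hJ | rewrite hz | rewrite ho];
         repeat match goal with H : forall y : X, e ?a y <> Wh |- _ =>
           specialize (H w); destruct (e a w) end; simpl; congruence).
    + match goal with H : Kset A _ |- _ => destruct H as [a ->] end.
      intro w; unfold fibre_top; rewrite hJ, hj, hn.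
      destruct (e a w); discriminate.
    + exists (one A). apply beq; intro x; unfold fibre_top.
      rewrite hJ, hj, hn, ho. reflexivity.
    + match goal with H : Kset A x |- _ => destruct H as [a ->] end.
      match goal with H : Kset A y |- _ => destruct H as [b ->] end.
      exists (meet A a b). apply beq; intro z; unfold fibre_top.
      rewrite !hm, !hJ, !hj, !hn, !hm.
      destruct (e a z), (e b z); reflexivity.
  - intros A1 A2 f _ _ Hf.
    assert (bfp : forall a, bottom_fibre A1 a -> bottom_fibre A2 (f a)).
    { intros a H. unfold bottom_fibre in *.
      pose proof Hf as [_ [_ [_ [_ [hz _]]]]]. rewrite <- hz.
      rewrite <- !hom_top by exact Hf. rewrite H. reflexivity. }
    split; [exact bfp|].
    pose proof Hf as Hf'.
    destruct Hf as [hm [hj [hn [hJ [hz ho]]]]].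
    unfold BA_morphism, system_morphism_on.
    repeat split; auto.
    intros k [a ->]. exists (f a). rewrite hJ, hom_top by exact Hf'. reflexivity.
Qed.
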